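(* Let $(A,S_A)$ and $(B,S_B)$ be objects of $\mathsf{SubS5^S}$ and let $T\colon(A,S_A)\to(B,S_B)$ and $Q\colon(B,S_B)\to(A,S_A)$ be morphisms of $\mathsf{SubS5^S}$ that are inverse to each other. Suppose $(A,S_A)$ is a de Vries algebra. Then: (1) for all $a_1,a_2\in A$: $a_1\le a_2\iff T[a_1]\supseteq T[a_2]\iff Q^{-1}[a_1]\subseteq Q^{-1}[a_2]$; (2) for all $a\in A$: $Q^{-1}[a]=S_B^{-1}[L(T[a])]$ and $T[a]=S_B[U(Q^{-1}[a])]$.
   Context: A subordination $S\colon A\to B$ between boolean algebras is a relation with (S1) $0\mathrel{S}0$, $1\mathrel{S}1$; (S2) $a,b\mathrel{S}c\Rightarrow(a\vee b)\mathrel{S}c$; (S3) $a\mathrel{S}c,d\Rightarrow a\mathrel{S}(c\wedge d)$; (S4) $a\le b\mathrel{S}c\le d\Rightarrow a\mathrel{S}d$. An $\mathsf{S5}$-subordination on $B$ also satisfies (S5) $a\mathrel{S}b\Rightarrow a\le b$; (S6) $a\mathrel{S}b\Rightarrow\neg b\mathrel{S}\neg a$; (S7) $a\mathrel{S}b\Rightarrow\exists c\,(a\mathrel{S}c\mathrel{S}b)$. $\mathsf{SubS5^S}$: objects $(B,S)$ with $S$ an $\mathsf{S5}$-subordination on $B$; morphisms $(B,S)\to(B',S')$ are subordinations $T$ with $T\circ S=T=S'\circ T$; identity on $(B,S)$ is $S$; composition relational ($a\mathrel{(T_2\circ T_1)}c$ iff $\exists b$, $a\mathrel{T_1}b\mathrel{T_2}c$).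 A de Vries algebra is $(B,S)$ in $\mathsf{SubS5^S}$ with $B$ complete and (S8) $a\ne0\Rightarrow\exists b\ne0,\ b\mathrel{S}a$. Notation: $T[a]=\{b\mid a\mathrel{T}b\}$, $Q^{-1}[a]=\{b\mid b\mathrel{Q}a\}$; for a set $X$, $S_B[X]=\{c\mid\exists x\in X,\ x\mathrel{S_B}c\}$ and $S_B^{-1}[X]=\{c\mid\exists x\in X,\ c\mathrel{S_B}x\}$; $U(X)$ and $L(X)$ are the sets of upper and lower bounds of $X$ in $B$. *)

(* Defs.v *)
(* boolean algebras are complemented distributive lattices
   with top and bottom ([ctbDistrLatticeType d]); relations are Prop-valued. *)
From HB Require Import structures.
From mathcomp Require Import all_boot all_order.
Set Implicit Arguments. Unset Strict Implicit. Unset Printing Implicit Defensive.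
Import Order.TTheory.
Local Open Scope order_scope.


(* relational composition: a (T2 o T1) c iff exists b, a T1 b T2 c *)
Definition rcomp {X Y Z : Type} (T1 : X -> Y -> Prop) (T2 : Y -> Z -> Prop)
  : X -> Z -> Prop := fun a c => exists b, T1 a b /\ T2 b c.

Definition releq {X Y : Type} (R1 R2 : X -> Y -> Prop) : Prop :=
  forall a b, R1 a b <-> R2 a b.

(* (S1)-(S4) *)
Definition subordination {dA dB : Order.disp_t} (A : ctbDistrLatticeType dA) (B : ctbDistrLatticeType dB)
  (S : A -> B -> Prop) : Prop :=
  [/\ S \bot \bot /\ S \top \top,
      (forall a b c, S a c -> S b c -> S (a `|` b) c),
      (forall a c d, S a c -> S a d -> S a (c `&` d)) &
      (forall a b c d, a <= b -> S b c -> c <= d -> S a d)].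

(* S5-subordination on B: (S1)-(S7) *)
Definition S5_subordination {dB : Order.disp_t} (B : ctbDistrLatticeType dB) (S : B -> B -> Prop)
  : Prop :=
  [/\ subordination S,
      (forall a b, S a b -> a <= b),
      (forall a b, S a b -> S (~` b) (~` a)) &
      (forall a b, S a b -> exists c, S a c /\ S c b)].

(* morphism (A,SA) -> (B,SB) of SubS5^S: subordination T with T o SA = T = SB o T *)
Definition SubS5S_morphism {dA dB : Order.disp_t} (A : ctbDistrLatticeType dA) (B : ctbDistrLatticeType dB)
  (SA : A -> A -> Prop) (SB : B -> B -> Prop) (T : A -> B -> Prop) : Prop :=
  [/\ subordination T, releq (rcomp SA T) T & releq (rcomp T SB) T].

Definition complete_lattice {dA : Order.disp_t} (A : ctbDistrLatticeType dA) : Prop :=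
  forall X : A -> Prop, exists s : A,
    (forall x, X x -> x <= s) /\ (forall u, (forall x, X x -> x <= u) -> s <= u).

(* de Vries algebra: object of SubS5^S, complete, and (S8) *)
Definition de_Vries {dA : Order.disp_t} (A : ctbDistrLatticeType dA) (S : A -> A -> Prop) : Prop :=
  [/\ S5_subordination S, complete_lattice A &
      (forall a : A, a != \bot -> exists b, b != \bot /\ S b a)].

(* Main.v *)
Require Import Defs.
From HB Require Import structures.
From mathcomp Require Import all_boot all_order.
Import Order.TTheory Order.Theory.
Local Open Scope order_scope.

Lemma key (dA : Order.disp_t) (A : ctbDistrLatticeType dA) (SA : A -> A -> Prop) :
  de_Vries SA -> forall x y : A, (forall e, SA e x -> SA e y) -> x <= y.
Proof.
move=> [[[_ _ _ S4] S5 _ _] _ S8] x y H.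
case: (boolP (x <= y)) => // nxy.
have nz : x `&` ~` y != \bot by rewrite -diffE diff_eq0.
have [e [ne0 Se]] := S8 _ nz.
have exy : e <= x `&` ~` y := S5 _ _ Se.
have ex : SA e x := S4 _ _ _ _ (lexx e) Se (leIl _ _).
have ey : e <= y := S5 _ _ (H _ ex).
have : e <= y `&` ~` y.
  rewrite lexI ey /=; exact: (le_trans exy (leIr _ _)).
by rewrite meetxC lex0 (negbTE ne0).
Qed.

Theorem lemma5p1 (dA dB : Order.disp_t)
  (A : ctbDistrLatticeType dA) (B : ctbDistrLatticeType dB)
  (SA : A -> A -> Prop) (SB : B -> B -> Prop)
  (T : A -> B -> Prop) (Q : B -> A -> Prop) :
  S5_subordination SA -> S5_subordination SB ->
  SubS5S_morphism SA SB T -> SubS5S_morphism SB SA Q ->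
  releq (rcomp T Q) SA -> releq (rcomp Q T) SB ->
  de_Vries SA ->
  (forall a1 a2 : A,
      (a1 <= a2 <-> (forall b, T a2 b -> T a1 b)) /\
      ((forall b, T a2 b -> T a1 b) <-> (forall b, Q b a1 -> Q b a2))) /\
  (forall a : A,
      (forall b : B, Q b a <->
         exists x : B, (forall y, T a y -> x <= y) /\ SB b x) /\
      (forall b : B, T a b <->
         exists x : B, (forall y, Q y a -> y <= x) /\ SB x b)).
Proof.
move=> HSA HSB [[_ _ _ T4] TSA SBT] [[_ _ _ Q4] QSB SAQ] TQ QT dV.
have [_ _ S6 _] := HSA.
have [_ SB5 _ _] := HSB.
have P1 : forall a1 a2 : A, (forall b, T a2 b -> T a1 b) -> a1 <= a2.
  move=> a1 a2 H; rewrite -leC; apply: (@key _ _ SA dV) => e He.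
  have h : SA a2 (~` e).
    have := S6 _ _ He; by rewrite complK.
  move: h => /TQ [b [Tb Qb]].
  have : SA a1 (~` e) by apply/TQ; exists b; split; [exact: H Tb | exact: Qb].
  by move/S6; rewrite complK.
have P2 : forall a1 a2 : A, (forall b, Q b a1 -> Q b a2) -> a1 <= a2.
  move=> a1 a2 H; apply: (@key _ _ SA dV) => e /TQ [b [Tb Qb]].
  apply/TQ; exists b; split; [exact: Tb | exact: H Qb].
split.
  move=> a1 a2; split; split.
  - move=> le b Tb; exact: T4 _ _ _ _ le Tb (lexx b).
  - exact: P1.
  - move=> H b Qb; exact: Q4 _ _ _ _ (lexx b) Qb (P1 _ _ H).
  - move=> H b Tb; exact: T4 _ _ _ _ (P2 _ _ H) Tb (lexx b).
move=> a; split=> b; split.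
- move=> /QSB [b' [Sbb' Qb']]; exists b'; split => // y Ty.
  apply: SB5; apply/QT; exists a; split => //.
- move=> [x [Hx /QT [a' [Qa' Ta']]]].
  have le : a' <= a.
    apply: P1 => y Ty; exact: T4 _ _ _ _ (lexx a') Ta' (Hx _ Ty).
  exact: Q4 _ _ _ _ (lexx b) Qa' le.
- move=> /SBT [b' [Tb' Sb']]; exists b'; split => // y Qy.
  apply: SB5; apply/QT; exists a; split => //.
- move=> [x [Hx /QT [a' [Qa' Ta']]]].
  have le : a <= a'.
    apply: P2 => y Qy; exact: Q4 _ _ _ _ (Hx _ Qy) Qa' (lexx a').
  exact: T4 _ _ _ _ le Ta' (lexx b).
Qed.
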